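(* Let $L$ be a frame (a complete lattice in which $a\wedge\bigvee_i b_i=\bigvee_i(a\wedge b_i)$ for all $a$ and all families $(b_i)$), with least element $0$ and greatest element $1$, and let $\tau$ be a topology on the set $L$ all of whose open sets are upper-closed with respect to the order of $L$. Define $\Phi:\tau\to L$ by \[\Phi(U)=\bigvee\{\alpha\in L \mid \exists\beta\in U:\ \alpha\wedge\beta=0\}.\] Then $\Phi$ is a homomorphism of frames: $\Phi(L)=1$, $\Phi(U\cap V)=\Phi(U)\wedge\Phi(V)$ for all $U,V\in\tau$, and $\Phi\bigl(\bigcup_i U_i\bigr)=\bigvee_i\Phi(U_i)$ for every family $(U_i)$ in $\tau$.
   Context: $\tau$ is ordered by inclusion, so it is itself a frame with finite meets given by intersections and arbitrary joins given by unions. *)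

(* Defs.v *)
(** Families are represented by their sets of
    values (predicates on the carrier). *)
Record frame := Frame {
  carrier :> Type;
  le : carrier -> carrier -> Prop;
  meet : carrier -> carrier -> carrier;
  sup : (carrier -> Prop) -> carrier;
  le_refl : forall x, le x x;
  le_trans : forall x y z, le x y -> le y z -> le x z;
  le_antisym : forall x y, le x y -> le y x -> x = y;
  meet_glb : forall a b x, le x (meet a b) <-> (le x a /\ le x b);
  sup_lub : forall (S : carrier -> Prop) y,
      le (sup S) y <-> (forall x, S x -> le x y);
  frame_distr : forall a (B : carrier -> Prop),
      meet a (sup B) = sup (fun x => exists b, B b /\ x = meet a b)
}.

Arguments le {f}.
Arguments meet {f}.
Arguments sup {f}.

Definition bot (L : frame) : L := sup (fun _ : L => False).
Definition top (L : frame) : L := sup (fun _ : L => True).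

Definition is_topology {T : Type} (tau : (T -> Prop) -> Prop) : Prop :=
  tau (fun _ => True) /\
  (forall U V, tau U -> tau V -> tau (fun x => U x /\ V x)) /\
  (forall (F : (T -> Prop) -> Prop),
      (forall U, F U -> tau U) -> tau (fun x => exists U, F U /\ U x)).

Definition upper_closed {L : frame} (U : L -> Prop) : Prop :=
  forall x y, le x y -> U x -> U y.

Definition Phi {L : frame} (U : L -> Prop) : L :=
  sup (fun alpha => exists beta, U beta /\ meet alpha beta = bot L).

(* Main.v *)
Require Import Defs.

Section H.
Variable L : frame.

Lemma le_sup' (S : L -> Prop) x : S x -> le x (sup S).
Proof. intro H. apply (proj1 (sup_lub L S (sup S)) (le_refl L _)). exact H. Qed.

Lemma sup_le' (S : L -> Prop) y : (forall x, S x -> le x y) -> le (sup S) y.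
Proof. intro H. apply (proj2 (sup_lub L S y)). exact H. Qed.

Lemma meet_l (a b : L) : le (meet a b) a.
Proof. apply (proj1 (meet_glb L a b _) (le_refl L _)). Qed.
Lemma meet_r (a b : L) : le (meet a b) b.
Proof. apply (proj1 (meet_glb L a b _) (le_refl L _)). Qed.
Lemma le_meet (a b x : L) : le x a -> le x b -> le x (meet a b).
Proof. intros; apply (proj2 (meet_glb L a b x)); auto. Qed.

Lemma meet_comm (a b : L) : meet a b = meet b a.
Proof. apply le_antisym; apply le_meet; (apply meet_l || apply meet_r). Qed.

Lemma bot_le (x : L) : le (bot L) x.
Proof. unfold bot. apply sup_le'. intros _ []. Qed.

Lemma le_bot (x : L) : le x (bot L) -> x = bot L.
Proof. intro; apply le_antisym; auto using bot_le. Qed.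

Lemma Phi_mono (U U' : L -> Prop) : (forall x, U x -> U' x) -> le (Phi U) (Phi U').
Proof.
  intro H. unfold Phi. apply sup_le'. intros x [b [Hb Hm]].
  apply le_sup'. exists b; auto.
Qed.
End H.

Theorem mainTheorem3 (L : frame) (tau : (L -> Prop) -> Prop)
  (Htop : is_topology tau)
  (Hup : forall U, tau U -> upper_closed U) :
  Phi (fun _ : L => True) = top L /\
  (forall U V, tau U -> tau V ->
     Phi (fun x => U x /\ V x) = meet (Phi U) (Phi V)) /\
  (forall (I : Type) (U : I -> L -> Prop), (forall i, tau (U i)) ->
     Phi (fun x => exists i, U i x) = sup (fun y => exists i, y = Phi (U i))).
Proof.
  split; [|split].
  - apply le_antisym.
    + unfold Phi, top. apply sup_le'. intros. apply le_sup'. exact I.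
    + unfold Phi, top. apply sup_le'. intros x _. apply le_sup'.
      exists (bot L). split; [exact I|]. apply le_bot, meet_r.
  - intros U V HU HV. apply le_antisym.
    + apply le_meet; apply Phi_mono; tauto.
    + set (PU := Phi U). unfold Phi at 1. rewrite (frame_distr L PU). apply sup_le'.
      intros y [b [[b' [Hb'V Hbb']] ->]].
      rewrite meet_comm; unfold PU, Phi at 1; rewrite (frame_distr L b). apply sup_le'.
      intros z [a [[a' [Ha'U Haa']] ->]].
      apply le_sup'.
      set (j := sup (fun x : L => x = a' \/ x = b')).
      exists j. split.
      * split.
        -- apply (Hup U HU a'); [apply le_sup'; auto | exact Ha'U].
        -- apply (Hup V HV b'); [apply le_sup'; auto | exact Hb'V].
      * apply le_bot. unfold j. rewrite frame_distr. apply sup_le'.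
        intros w [x [[-> | ->] ->]].
        -- rewrite <- Haa'. apply le_meet.
           ++ apply le_trans with (meet b a); [apply meet_l|apply meet_r].
           ++ apply meet_r.
        -- rewrite <- Hbb'. apply le_meet.
           ++ apply le_trans with (meet b a); [apply meet_l|apply meet_l].
           ++ apply meet_r.
  - intros Iy U HU. apply le_antisym.
    + unfold Phi at 1. apply sup_le'. intros x [b [[i Hi] Hm]].
      apply le_trans with (Phi (U i)).
      * apply le_sup'. exists b; auto.
      * apply le_sup'. exists i; reflexivity.
    + apply sup_le'. intros y [i ->]. apply Phi_mono. intros x Hx; exists i; exact Hx.
Qed.
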